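(* The line graph of the Petersen graph is vertex-transitive but not uniformly vertex-transitive.
   Context: The Petersen graph has as vertices the $2$-element subsets of $\{1,2,3,4,5\}$, adjacent iff disjoint. The line graph $L(\Gamma)$ has vertex set $E(\Gamma)$, two edges adjacent iff they share an endpoint. A permutation $\sigma$ of the vertex set is identified with its permutation matrix (the $(u,v)$ entry is $1$ iff $\sigma(u)=v$); $J_n$ is the $n\times n$ all-ones matrix. A graph on $n$ vertices is uniformly vertex-transitive if there is a set of $n$ distinct automorphisms $\{\sigma_1,\ldots,\sigma_n\}$ with $\sum_i\sigma_i=J_n$. *)

(* Defs.v *)
From HB Require Import structures.
From mathcomp Require Import all_boot all_order all_algebra all_fingroup.
Set Implicit Arguments. Unset Strict Implicit. Unset Printing Implicit Defensive.
Import GRing.Theory.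

Definition is_aut (T : finType) (e : rel T) (s : {perm T}) : Prop :=
  forall u v, e (s u) (s v) = e u v.

Definition vertex_transitive (T : finType) (e : rel T) : Prop :=
  forall u v : T, exists s : {perm T}, is_aut e s /\ s u = v.

Definition perm_matrix (T : finType) (s : {perm T}) : 'M[int]_#|T| :=
  (\matrix_(i, j) (s (enum_val i) == enum_val j)%:R)%R.

Definition uniformly_vertex_transitive (T : finType) (e : rel T) : Prop :=
  exists S : {set {perm T}},
    [/\ #|S| = #|T|, (forall s, s \in S -> is_aut e s) &
        (\sum_(s in S) perm_matrix s = const_mx 1)%R].

(* Petersen graph: vertices are 2-element subsets of {1,...,5} (here 'I_5 = {0,...,4}),
   adjacent iff disjoint *)
Definition PV := {A : {set 'I_5} | #|A| == 2}.
Definition petersen_adj : rel PV := fun A B => [disjoint val A & val B].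

Definition PE := {E : {set PV} | (#|E| == 2) &&
  [forall A in E, forall B in E, (A != B) ==> petersen_adj A B]}.

Definition line_petersen_adj : rel PE := fun E F =>
  (E != F) && (val E :&: val F != set0).

(* Main.v *)
Require Import Defs.
From mathcomp Require Import all_boot all_order all_algebra all_fingroup.
From HB Require Import structures.
Set Implicit Arguments. Unset Strict Implicit. Unset Printing Implicit Defensive.

Lemma set2E (T : finType) (a b c d : T) : a != b ->
  ([set a; b] == [set c; d]) = ((a == c) && (b == d)) || ((a == d) && (b == c)).
Proof.
move=> ab; apply/eqP/idP => [E|].
  have ha : a \in [set c; d] by rewrite -E set21.
  have hb : b \in [set c; d] by rewrite -E set22.
  move: ha hb; rewrite !inE.
  case/orP=> /eqP ea; case/orP=> /eqP eb.
  - by move: ab; rewrite ea eb eqxx.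
  - by rewrite ea eb !eqxx.
  - by rewrite ea eb !eqxx orbT.
  - by move: ab; rewrite ea eb eqxx.
case/orP=> /andP[/eqP-> /eqP->] //; exact: setUC.
Qed.

Lemma setI2_neq0 (T : finType) (a b c d : T) :
  ([set a; b] :&: [set c; d] != set0) = [|| a == c, a == d, b == c | b == d].
Proof.
apply/set0Pn/idP => [[x]|].
  by rewrite !inE => /andP[/orP[]/eqP-> /orP[]/eqP->]; rewrite eqxx ?orbT.
case/or4P=> /eqP->.
- by exists c; rewrite !inE eqxx.
- by exists d; rewrite !inE eqxx ?orbT.
- by exists c; rewrite !inE eqxx ?orbT.
- by exists d; rewrite !inE eqxx ?orbT.
Qed.

Lemma inord5E (a b : nat) : a < 5 -> b < 5 -> ((inord a : 'I_5) == inord b) = (a == b).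
Proof. by move=> ha hb; rewrite -val_eqE /= !inordK. Qed.

Definition vS (a b : nat) : {set 'I_5} := [set inord a; inord b].

Lemma card_vS a b : a < 5 -> b < 5 -> a != b -> #|vS a b| == 2.
Proof. by move=> ha hb hab; rewrite cards2 inord5E // hab. Qed.

Definition v0 : PV := exist _ (vS 0 1) (@card_vS 0 1 isT isT isT).
Definition mkV (a b : nat) : PV := insubd v0 (vS a b).

Lemma val_mkV a b : a < 5 -> b < 5 -> a != b -> val (mkV a b) = vS a b.
Proof. by move=> ha hb hab; rewrite /mkV insubdK // unfold_in /= card_vS. Qed.

Definition peq (a b c d : nat) := ((a==c)&&(b==d)) || ((a==d)&&(b==c)).

Lemma mkV_eq a b c d : a < 5 -> b < 5 -> c < 5 -> d < 5 -> a != b -> c != d ->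
  (mkV a b == mkV c d) = peq a b c d.
Proof.
move=> ha hb hc hd hab hcd.
rewrite -val_eqE /= !val_mkV // /vS set2E ?inord5E //.
Qed.

Lemma disj_vS a b c d : a < 5 -> b < 5 -> c < 5 -> d < 5 ->
  [disjoint vS a b & vS c d] = ~~ [|| a == c, a == d, b == c | b == d].
Proof.
by move=> ha hb hc hd; rewrite -setI_eq0 /vS -(negbK (_ == set0)) setI2_neq0 !inord5E.
Qed.

Definition dist4 (a b c d : nat) :=
  [&& [&& a < 5, b < 5, c < 5 & d < 5], a != b, c != d &
      ~~ [|| a == c, a == d, b == c | b == d]].

Lemma adj_mkV a b c d : dist4 a b c d ->
  petersen_adj (mkV a b) (mkV c d) /\ petersen_adj (mkV c d) (mkV a b).
Proof.
case/and4P=> /and4P[ha hb hc hd] hab hcd H.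
rewrite /petersen_adj !val_mkV // disjoint_sym disj_vS //.
by move: H; rewrite ![_ == a]eq_sym ![_ == b]eq_sym => H; split => //; move: H;
  case: (a == c); case: (a == d); case: (b == c); case: (b == d).
Qed.

Lemma neq_mkV a b c d : dist4 a b c d -> mkV a b != mkV c d.
Proof.
move=> h; case/and4P: (h) => /and4P[ha hb hc hd] hab hcd H.
rewrite mkV_eq // /peq; move: H.
by case: (a == c); case: (a == d); case: (b == c); case: (b == d).
Qed.

Lemma mkE_ok a b c d : dist4 a b c d ->
  (#|[set mkV a b; mkV c d]| == 2) && [forall A in [set mkV a b; mkV c d],
     forall B in [set mkV a b; mkV c d], (A != B) ==> petersen_adj A B].
Proof.
move=> h; have [h1 h2] := adj_mkV h; have hn := neq_mkV h.
rewrite cards2 hn /=.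
apply/forall_inP => X; rewrite !inE => /orP[]/eqP->;
apply/forall_inP => Y; rewrite !inE => /orP[]/eqP->; rewrite ?eqxx //= ?h1 ?h2 ?implybT //.
Qed.

Definition e0 : PE := exist _ [set mkV 0 1; mkV 2 3] (@mkE_ok 0 1 2 3 isT).
Definition mkE (a b c d : nat) : PE := insubd e0 [set mkV a b; mkV c d].

Lemma val_mkE a b c d : dist4 a b c d -> val (mkE a b c d) = [set mkV a b; mkV c d].
Proof. by move=> h; rewrite /mkE insubdK // unfold_in /= mkE_ok. Qed.

Definition sameQ (a b c d a' b' c' d' : nat) :=
  (peq a b a' b' && peq c d c' d') || (peq a b c' d' && peq c d a' b').
Definition shareQ (a b c d a' b' c' d' : nat) :=
  [|| peq a b a' b', peq a b c' d', peq c d a' b' | peq c d c' d'].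

Lemma mkE_eq a b c d a' b' c' d' : dist4 a b c d -> dist4 a' b' c' d' ->
  (mkE a b c d == mkE a' b' c' d') = sameQ a b c d a' b' c' d'.
Proof.
move=> h h'; rewrite -val_eqE /= !val_mkE // set2E ?neq_mkV //.
case/and4P: h => /and4P[ha hb hc hd] hab hcd _.
case/and4P: h' => /and4P[ha' hb' hc' hd'] hab' hcd' _.
by rewrite !mkV_eq.
Qed.

Lemma adj_mkE a b c d a' b' c' d' : dist4 a b c d -> dist4 a' b' c' d' ->
  line_petersen_adj (mkE a b c d) (mkE a' b' c' d') =
  ~~ sameQ a b c d a' b' c' d' && shareQ a b c d a' b' c' d'.
Proof.
move=> h h'; rewrite /line_petersen_adj mkE_eq // !val_mkE // setI2_neq0.
case/and4P: h => /and4P[ha hb hc hd] hab hcd _.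
case/and4P: h' => /and4P[ha' hb' hc' hd'] hab' hcd' _.
by rewrite !mkV_eq.
Qed.

Lemma PE_surj (E : PE) : exists a b c d, dist4 a b c d /\ E = mkE a b c d.
Proof.
have := valP E => /= /andP[/cards2P[A [B [AB eE]]] H].
have := valP A => /= /cards2P[x [y [xy eA]]].
have := valP B => /= /cards2P[z [w [zw eB]]].
have xy' : val x != val y by rewrite val_eqE.
have zw' : val z != val w by rewrite val_eqE.
have eAm : A = mkV x y.
  by apply: val_inj; rewrite val_mkV ?ltn_ord // -[\val A]/(sval A) eA /vS !inord_val.
have eBm : B = mkV z w.
  by apply: val_inj; rewrite val_mkV ?ltn_ord // -[\val B]/(sval B) eB /vS !inord_val.
move/forall_inP/(_ A): H; rewrite eE set21 => /(_ isT)/forall_inP/(_ B (set22 _ _)).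
move/implyP/(_ AB); rewrite eAm eBm /petersen_adj !val_mkV ?ltn_ord //.
rewrite disj_vS ?ltn_ord // => hd.
have h4 : dist4 x y z w by rewrite /dist4 !ltn_ord xy' zw' hd.
exists x, y, z, w; split => //.
by apply: val_inj; rewrite val_mkE // -[\val E]/(sval E) eE eAm eBm.
Qed.

Definition from_iota n (P : pred nat) : all P (iota 0 n) -> forall x, x < n -> P x.
Proof. by move/allP=> H x hx; apply: H; rewrite mem_iota. Qed.

Definition tab : seq (seq nat) := [:: [:: 0; 1; 2; 3]; [:: 0; 1; 2; 4]; [:: 0; 1; 3; 4]; [:: 0; 2; 1; 3]; [:: 0; 2; 1; 4]; [:: 0; 2; 3; 4]; [:: 0; 3; 1; 2]; [:: 0; 3; 1; 4]; [:: 0; 3; 2; 4]; [:: 0; 4; 1; 2]; [:: 0; 4; 1; 3]; [:: 0; 4; 2; 3]; [:: 1; 2; 3; 4]; [:: 1; 3; 2; 4]; [:: 1; 4; 2; 3]].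
Definition AutList : seq (seq nat) := [:: [:: 0; 1; 2; 3; 4; 5; 6; 7; 8; 9; 10; 11; 12; 13; 14]; [:: 1; 0; 2; 4; 3; 5; 9; 10; 11; 6; 7; 8; 12; 14; 13]; [:: 0; 2; 1; 6; 7; 8; 3; 4; 5; 10; 9; 11; 13; 12; 14]; [:: 2; 0; 1; 7; 6; 8; 10; 9; 11; 3; 4; 5; 13; 14; 12]; [:: 1; 2; 0; 9; 10; 11; 4; 3; 5; 7; 6; 8; 14; 12; 13]; [:: 2; 1; 0; 10; 9; 11; 7; 6; 8; 4; 3; 5; 14; 13; 12]; [:: 3; 4; 5; 0; 1; 2; 6; 8; 7; 9; 11; 10; 12; 14; 13]; [:: 4; 3; 5; 1; 0; 2; 9; 11; 10; 6; 8; 7; 12; 13; 14]; [:: 3; 5; 4; 6; 8; 7; 0; 1; 2; 11; 9; 10; 14; 12; 13]; [:: 5; 3; 4; 8; 6; 7; 11; 9; 10; 0; 1; 2; 14; 13; 12]; [:: 4; 5; 3; 9; 11; 10; 1; 0; 2; 8; 6; 7; 13; 12; 14]; [:: 5; 4; 3; 11; 9; 10; 8; 6; 7; 1; 0; 2; 13; 14; 12]; [:: 6; 7; 8; 0; 2; 1; 3; 5; 4; 10; 11; 9; 13; 14; 12]; [:: 7; 6; 8; 2; 0; 1; 10; 11; 9; 3; 5; 4; 13; 12; 14]; [:: 6; 8; 7; 3; 5; 4; 0; 2; 1; 11; 10; 9; 14; 13; 12]; [:: 8; 6; 7; 5; 3; 4; 11; 10; 9; 0; 2; 1; 14; 12;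 13]; [:: 7; 8; 6; 10; 11; 9; 2; 0; 1; 5; 3; 4; 12; 13; 14]; [:: 8; 7; 6; 11; 10; 9; 5; 3; 4; 2; 0; 1; 12; 14; 13]; [:: 9; 10; 11; 1; 2; 0; 4; 5; 3; 7; 8; 6; 14; 13; 12]; [:: 10; 9; 11; 2; 1; 0; 7; 8; 6; 4; 5; 3; 14; 12; 13]; [:: 9; 11; 10; 4; 5; 3; 1; 2; 0; 8; 7; 6; 13; 14; 12]; [:: 11; 9; 10; 5; 4; 3; 8; 7; 6; 1; 2; 0; 13; 12; 14]; [:: 10; 11; 9; 7; 8; 6; 2; 1; 0; 5; 4; 3; 12; 14; 13]; [:: 11; 10; 9; 8; 7; 6; 5; 4; 3; 2; 1; 0; 12; 13; 14]; [:: 0; 1; 2; 6; 9; 12; 3; 10; 13; 4; 7; 14; 5; 8; 11]; [:: 1; 0; 2; 9; 6; 12; 4; 7; 14; 3; 10; 13; 5; 11; 8]; [:: 0; 2; 1; 3; 10; 13; 6; 9; 12; 7; 4; 14; 8; 5; 11]; [:: 2; 0; 1; 10; 3; 13; 7; 4; 14; 6; 9; 12; 8; 11; 5]; [:: 1; 2; 0; 4; 7; 14; 9; 6; 12; 10; 3; 13; 11; 5; 8]; [:: 2; 1; 0; 7; 4; 14; 10; 3; 13; 9; 6; 12; 11; 8; 5]; [:: 6; 9; 12; 0; 1; 2; 3; 13; 10; 4; 14; 7; 5; 11; 8]; [:: 9; 6; 12; 1; 0; 2; 4; 14; 7; 3; 13; 10; 5; 8; 11]; [:: 6; 12; 9;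 3; 13; 10; 0; 1; 2; 14; 4; 7; 11; 5; 8]; [:: 12; 6; 9; 13; 3; 10; 14; 4; 7; 0; 1; 2; 11; 8; 5]; [:: 9; 12; 6; 4; 14; 7; 1; 0; 2; 13; 3; 10; 8; 5; 11]; [:: 12; 9; 6; 14; 4; 7; 13; 3; 10; 1; 0; 2; 8; 11; 5]; [:: 3; 10; 13; 0; 2; 1; 6; 12; 9; 7; 14; 4; 8; 11; 5]; [:: 10; 3; 13; 2; 0; 1; 7; 14; 4; 6; 12; 9; 8; 5; 11]; [:: 3; 13; 10; 6; 12; 9; 0; 2; 1; 14; 7; 4; 11; 8; 5]; [:: 13; 3; 10; 12; 6; 9; 14; 7; 4; 0; 2; 1; 11; 5; 8]; [:: 10; 13; 3; 7; 14; 4; 2; 0; 1; 12; 6; 9; 5; 8; 11]; [:: 13; 10; 3; 14; 7; 4; 12; 6; 9; 2; 0; 1; 5; 11; 8]; [:: 4; 7; 14; 1; 2; 0; 9; 12; 6; 10; 13; 3; 11; 8; 5]; [:: 7; 4; 14; 2; 1; 0; 10; 13; 3; 9; 12; 6; 11; 5; 8]; [:: 4; 14; 7; 9; 12; 6; 1; 2; 0; 13; 10; 3; 8; 11; 5]; [:: 14; 4; 7; 12; 9; 6; 13; 10; 3; 1; 2; 0; 8; 5; 11]; [:: 7; 14; 4; 10; 13; 3; 2; 1; 0; 12; 9; 6; 5; 11; 8]; [:: 14; 7; 4; 13; 10; 3; 12; 9; 6; 2; 1; 0; 5; 8; 11]; [:: 3; 4; 5; 6; 9; 12; 0; 11; 14;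 1; 8; 13; 2; 7; 10]; [:: 4; 3; 5; 9; 6; 12; 1; 8; 13; 0; 11; 14; 2; 10; 7]; [:: 3; 5; 4; 0; 11; 14; 6; 9; 12; 8; 1; 13; 7; 2; 10]; [:: 5; 3; 4; 11; 0; 14; 8; 1; 13; 6; 9; 12; 7; 10; 2]; [:: 4; 5; 3; 1; 8; 13; 9; 6; 12; 11; 0; 14; 10; 2; 7]; [:: 5; 4; 3; 8; 1; 13; 11; 0; 14; 9; 6; 12; 10; 7; 2]; [:: 6; 9; 12; 3; 4; 5; 0; 14; 11; 1; 13; 8; 2; 10; 7]; [:: 9; 6; 12; 4; 3; 5; 1; 13; 8; 0; 14; 11; 2; 7; 10]; [:: 6; 12; 9; 0; 14; 11; 3; 4; 5; 13; 1; 8; 10; 2; 7]; [:: 12; 6; 9; 14; 0; 11; 13; 1; 8; 3; 4; 5; 10; 7; 2]; [:: 9; 12; 6; 1; 13; 8; 4; 3; 5; 14; 0; 11; 7; 2; 10]; [:: 12; 9; 6; 13; 1; 8; 14; 0; 11; 4; 3; 5; 7; 10; 2]; [:: 0; 11; 14; 3; 5; 4; 6; 12; 9; 8; 13; 1; 7; 10; 2]; [:: 11; 0; 14; 5; 3; 4; 8; 13; 1; 6; 12; 9; 7; 2; 10]; [:: 0; 14; 11; 6; 12; 9; 3; 5; 4; 13; 8; 1; 10; 7; 2]; [:: 14; 0; 11; 12; 6; 9; 13; 8; 1; 3; 5; 4; 10; 2; 7]; [:: 11; 14; 0; 8; 13; 1; 5; 3; 4; 12; 6; 9; 2; 7; 10];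 [:: 14; 11; 0; 13; 8; 1; 12; 6; 9; 5; 3; 4; 2; 10; 7]; [:: 1; 8; 13; 4; 5; 3; 9; 12; 6; 11; 14; 0; 10; 7; 2]; [:: 8; 1; 13; 5; 4; 3; 11; 14; 0; 9; 12; 6; 10; 2; 7]; [:: 1; 13; 8; 9; 12; 6; 4; 5; 3; 14; 11; 0; 7; 10; 2]; [:: 13; 1; 8; 12; 9; 6; 14; 11; 0; 4; 5; 3; 7; 2; 10]; [:: 8; 13; 1; 11; 14; 0; 5; 4; 3; 12; 9; 6; 2; 10; 7]; [:: 13; 8; 1; 14; 11; 0; 12; 9; 6; 5; 4; 3; 2; 7; 10]; [:: 6; 7; 8; 3; 10; 13; 0; 11; 14; 2; 5; 12; 1; 4; 9]; [:: 7; 6; 8; 10; 3; 13; 2; 5; 12; 0; 11; 14; 1; 9; 4]; [:: 6; 8; 7; 0; 11; 14; 3; 10; 13; 5; 2; 12; 4; 1; 9]; [:: 8; 6; 7; 11; 0; 14; 5; 2; 12; 3; 10; 13; 4; 9; 1]; [:: 7; 8; 6; 2; 5; 12; 10; 3; 13; 11; 0; 14; 9; 1; 4]; [:: 8; 7; 6; 5; 2; 12; 11; 0; 14; 10; 3; 13; 9; 4; 1]; [:: 3; 10; 13; 6; 7; 8; 0; 14; 11; 2; 12; 5; 1; 9; 4]; [:: 10; 3; 13; 7; 6; 8; 2; 12; 5; 0; 14; 11; 1; 4; 9]; [:: 3; 13; 10; 0; 14; 11; 6; 7; 8; 12; 2; 5; 9; 1; 4]; [:: 13; 3; 10; 14;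 0; 11; 12; 2; 5; 6; 7; 8; 9; 4; 1]; [:: 10; 13; 3; 2; 12; 5; 7; 6; 8; 14; 0; 11; 4; 1; 9]; [:: 13; 10; 3; 12; 2; 5; 14; 0; 11; 7; 6; 8; 4; 9; 1]; [:: 0; 11; 14; 6; 8; 7; 3; 13; 10; 5; 12; 2; 4; 9; 1]; [:: 11; 0; 14; 8; 6; 7; 5; 12; 2; 3; 13; 10; 4; 1; 9]; [:: 0; 14; 11; 3; 13; 10; 6; 8; 7; 12; 5; 2; 9; 4; 1]; [:: 14; 0; 11; 13; 3; 10; 12; 5; 2; 6; 8; 7; 9; 1; 4]; [:: 11; 14; 0; 5; 12; 2; 8; 6; 7; 13; 3; 10; 1; 4; 9]; [:: 14; 11; 0; 12; 5; 2; 13; 3; 10; 8; 6; 7; 1; 9; 4]; [:: 2; 5; 12; 7; 8; 6; 10; 13; 3; 11; 14; 0; 9; 4; 1]; [:: 5; 2; 12; 8; 7; 6; 11; 14; 0; 10; 13; 3; 9; 1; 4]; [:: 2; 12; 5; 10; 13; 3; 7; 8; 6; 14; 11; 0; 4; 9; 1]; [:: 12; 2; 5; 13; 10; 3; 14; 11; 0; 7; 8; 6; 4; 1; 9]; [:: 5; 12; 2; 11; 14; 0; 8; 7; 6; 13; 10; 3; 1; 9; 4]; [:: 12; 5; 2; 14; 11; 0; 13; 10; 3; 8; 7; 6; 1; 4; 9]; [:: 9; 10; 11; 4; 7; 14; 1; 8; 13; 2; 5; 12; 0; 3; 6]; [:: 10; 9; 11; 7; 4; 14; 2; 5; 12; 1;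 8; 13; 0; 6; 3]; [:: 9; 11; 10; 1; 8; 13; 4; 7; 14; 5; 2; 12; 3; 0; 6]; [:: 11; 9; 10; 8; 1; 13; 5; 2; 12; 4; 7; 14; 3; 6; 0]; [:: 10; 11; 9; 2; 5; 12; 7; 4; 14; 8; 1; 13; 6; 0; 3]; [:: 11; 10; 9; 5; 2; 12; 8; 1; 13; 7; 4; 14; 6; 3; 0]; [:: 4; 7; 14; 9; 10; 11; 1; 13; 8; 2; 12; 5; 0; 6; 3]; [:: 7; 4; 14; 10; 9; 11; 2; 12; 5; 1; 13; 8; 0; 3; 6]; [:: 4; 14; 7; 1; 13; 8; 9; 10; 11; 12; 2; 5; 6; 0; 3]; [:: 14; 4; 7; 13; 1; 8; 12; 2; 5; 9; 10; 11; 6; 3; 0]; [:: 7; 14; 4; 2; 12; 5; 10; 9; 11; 13; 1; 8; 3; 0; 6]; [:: 14; 7; 4; 12; 2; 5; 13; 1; 8; 10; 9; 11; 3; 6; 0]; [:: 1; 8; 13; 9; 11; 10; 4; 14; 7; 5; 12; 2; 3; 6; 0]; [:: 8; 1; 13; 11; 9; 10; 5; 12; 2; 4; 14; 7; 3; 0; 6]; [:: 1; 13; 8; 4; 14; 7; 9; 11; 10; 12; 5; 2; 6; 3; 0]; [:: 13; 1; 8; 14; 4; 7; 12; 5; 2; 9; 11; 10; 6; 0; 3]; [:: 8; 13; 1; 5; 12; 2; 11; 9; 10; 14; 4; 7; 0; 3; 6]; [:: 13; 8; 1; 12; 5; 2; 14; 4; 7; 11; 9; 10; 0; 6; 3]; [::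 2; 5; 12; 10; 11; 9; 7; 14; 4; 8; 13; 1; 6; 3; 0]; [:: 5; 2; 12; 11; 10; 9; 8; 13; 1; 7; 14; 4; 6; 0; 3]; [:: 2; 12; 5; 7; 14; 4; 10; 11; 9; 13; 8; 1; 3; 6; 0]; [:: 12; 2; 5; 14; 7; 4; 13; 8; 1; 10; 11; 9; 3; 0; 6]; [:: 5; 12; 2; 8; 13; 1; 11; 10; 9; 14; 7; 4; 0; 6; 3]; [:: 12; 5; 2; 13; 8; 1; 14; 7; 4; 11; 10; 9; 0; 3; 6]].
Definition q (i k : nat) := nth 0 (nth [::] tab i) k.
Definition sameN i j := sameQ (q i 0) (q i 1) (q i 2) (q i 3) (q j 0) (q j 1) (q j 2) (q j 3).
Definition adjN i j := ~~ sameN i j &&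
  shareQ (q i 0) (q i 1) (q i 2) (q i 3) (q j 0) (q j 1) (q j 2) (q j 3).

Lemma tab_ok : all (fun i => dist4 (q i 0) (q i 1) (q i 2) (q i 3)) (iota 0 15).
Proof. by vm_compute. Qed.
Lemma inj_ok : all (fun i => all (fun j => sameN i j ==> (i == j)) (iota 0 15)) (iota 0 15).
Proof. by vm_compute. Qed.
Lemma surj_ok : all (fun a => all (fun b => all (fun c => all (fun d =>
  dist4 a b c d ==> has (fun i => sameQ (q i 0) (q i 1) (q i 2) (q i 3) a b c d) (iota 0 15))
  (iota 0 5)) (iota 0 5)) (iota 0 5)) (iota 0 5).
Proof. by vm_compute. Qed.

HB.lock Definition psi (i : 'I_15) : PE := mkE (q i 0) (q i 1) (q i 2) (q i 3).

Lemma tabd (i : 'I_15) : dist4 (q i 0) (q i 1) (q i 2) (q i 3).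
Proof. exact: from_iota tab_ok _ (ltn_ord i). Qed.

Lemma psi_adj i j : line_petersen_adj (psi i) (psi j) = adjN i j.
Proof. by rewrite psi.unlock adj_mkE ?tabd. Qed.

Lemma psi_inj : injective psi.
Proof.
move=> i j /eqP; rewrite psi.unlock mkE_eq ?tabd // => h.
apply/eqP; rewrite -val_eqE /=.
by move/implyP: (from_iota (from_iota inj_ok (ltn_ord i)) (ltn_ord j)); apply.
Qed.

Lemma psi_surj E : exists i, psi i = E.
Proof.
have [a [b [c [d [h ->]]]]] := PE_surj E.
case/and4P: (h) => /and4P[ha hb hc hd] _ _ _.
have := from_iota (from_iota (from_iota (from_iota surj_ok ha) hb) hc) hd.
move/implyP/(_ h)/hasP => [i]; rewrite mem_iota /= add0n => hi hs.
exists (Ordinal hi); apply/eqP; rewrite psi.unlock mkE_eq //.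
exact: (from_iota tab_ok hi).
Qed.

HB.lock Definition phi (E : PE) : 'I_15 := odflt ord0 [pick i | psi i == E].

Lemma phiK E : psi (phi E) = E.
Proof.
rewrite phi.unlock; case: pickP => [i /eqP //|H].
by have [i hi] := psi_surj E; move: (H i); rewrite hi eqxx.
Qed.

Lemma psiK i : phi (psi i) = i.
Proof. by apply: psi_inj; rewrite phiK. Qed.

Definition Bs : seq nat := [:: 0; 4; 8; 10; 12].
Definition pat (t : seq nat) (y : nat) := [seq (y == b) || adjN y b | b <- t].
Definition pats t := [seq pat t y | y <- iota 0 15].
Definition CC t := map (pat t) t == map (pat Bs) Bs.
Definition okc (y b : nat) (t bs : seq nat) :=
  all (fun p => ((y == p.1) == (b == p.2)) && (adjN y p.1 == adjN b p.2)) (zip t bs).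
Fixpoint genR (bs : seq nat) : seq (seq nat) := if bs is b :: bs' then
  flatten (map (fun t => map (fun y => y :: t) (filter (fun y => okc y b t bs') (iota 0 15))) (genR bs'))
  else [:: [::]].
Definition isAutN (t : seq nat) := [&& size t == 15, all (fun x => x < 15) t, uniq t &
  all (fun i => all (fun j => adjN (nth 0 t i) (nth 0 t j) == adjN i j) (iota 0 15)) (iota 0 15)].
Definition recon t := [seq index (pat Bs x) (pats t) | x <- iota 0 15].
Definition classify_ok := all (fun t => CC t ==> (uniq (pats t) &&
  ((recon t \in AutList) || ~~ isAutN (recon t)))) (genR Bs).
Lemma classify_okT : classify_ok. Proof. vm_compute. reflexivity. Qed.

Fixpoint pw (t bs : seq nat) := match t, bs with
  | y :: t', b :: bs' => okc y b t' bs' && pw t' bs' | _, _ => true end.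

Lemma genR_cons b bs : genR (b :: bs) =
  flatten (map (fun t => map (fun y => y :: t) (filter (fun y => okc y b t bs) (iota 0 15))) (genR bs)).
Proof. by []. Qed.

Lemma genR_complete bs t : size t = size bs -> all (fun x => x < 15) t -> pw t bs ->
  t \in genR bs.
Proof.
elim: bs t => [|b bs IH] [|y t] hs; try discriminate hs.
  by move=> _ _; rewrite inE.
move=> /andP[hy ht] /andP[ho hp].
rewrite genR_cons.
apply/flattenP; exists (map (fun y => y :: t) (filter (fun y => okc y b t bs) (iota 0 15))).
  apply: (map_f (fun t => map (fun y => y :: t) (filter (fun y => okc y b t bs) (iota 0 15)))).
  by apply: IH => //; case: hs.
by apply: (map_f (fun y => y :: t)); rewrite mem_filter ho mem_iota.
Qed.

Section G.
Variable gN : nat -> nat.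
Hypothesis gB : forall x, x < 15 -> gN x < 15.
Hypothesis gI : forall x y, x < 15 -> y < 15 -> (gN x == gN y) = (x == y).
Hypothesis gA : forall x y, x < 15 -> y < 15 -> adjN (gN x) (gN y) = adjN x y.

Lemma okc_g b bs : b < 15 -> all (fun x => x < 15) bs -> okc (gN b) b (map gN bs) bs.
Proof.
move=> hb; elim: bs => [|b' bs IH] //= /andP[hb' hbs].
by rewrite /okc /= gI // gA // !eqxx /=; exact: IH.
Qed.

Lemma pw_g bs : all (fun x => x < 15) bs -> pw (map gN bs) bs.
Proof.
elim: bs => [|b bs IH] //= /andP[hb hbs].
by rewrite okc_g // IH.
Qed.

Lemma patg x bs : x < 15 -> all (fun x => x < 15) bs -> pat (map gN bs) (gN x) = pat bs x.
Proof.
move=> hx; elim: bs => [|b bs IH] //= /andP[hb hbs].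
by rewrite gI // gA // IH.
Qed.

Lemma classify : [seq gN x | x <- iota 0 15] \in AutList.
Proof.
set t := map gN Bs.
have hBs : all (fun x => x < 15) Bs by [].
have ht : t \in genR Bs.
  apply: genR_complete; first by rewrite size_map.
    by apply/allP => y /mapP[x hx ->]; apply: gB; move/allP: hBs; apply.
  exact: pw_g.
have hC : CC t.
  rewrite /CC /t -map_comp; apply/eqP/eq_in_map => x hx; rewrite [LHS]/comp patg //.
    by move/allP: hBs; apply.
move/allP/(_ t ht): classify_okT; rewrite hC /= => /andP[hu hm].
have hpat : forall x, x < 15 -> nth [::] (pats t) (gN x) = pat t (gN x).
  by move=> x hx; rewrite /pats (nth_map 0) ?size_iota ?gB // nth_iota ?gB.
have hrec : recon t = [seq gN x | x <- iota 0 15].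
  apply/eq_in_map => x; rewrite mem_iota add0n => /andP[_ hx].
  have hs : gN x < size (pats t) by rewrite /pats size_map size_iota; exact: gB.
  by rewrite -(patg hx hBs) -(hpat x hx) (@index_uniq _ [::] _ _ hs hu).
suff: recon t \in AutList by rewrite hrec.
case/orP: hm => // /negP H; exfalso; apply: H; rewrite hrec.
have hn : forall i, i < 15 -> nth 0 [seq gN x | x <- iota 0 15] i = gN i.
  by move=> i hi; rewrite (nth_map 0) ?size_iota // nth_iota.
apply/and4P; split.
- by rewrite size_map size_iota.
- by apply/allP => y /mapP[x]; rewrite mem_iota add0n => /andP[_ hx] ->; apply: gB.
- rewrite map_inj_in_uniq ?iota_uniq // => x y; rewrite !mem_iota !add0n => /andP[_ hx] /andP[_ hy] /eqP.
  by rewrite gI // => /eqP.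
- apply/allP => i; rewrite mem_iota add0n => /andP[_ hi]; apply/allP => j; rewrite mem_iota add0n => /andP[_ hj].
  by rewrite !hn // gA.
Qed.
End G.

Definition compat (t t' : seq nat) := all (fun u => nth 0 t u != nth 0 t' u) (iota 0 15).
Definition groups v := [seq t <- AutList | nth 0 t 0 == v].
Fixpoint srch (vs : seq nat) (chosen : seq (seq nat)) : bool :=
  if vs is v :: vs' then
    has (fun t => if all (compat t) chosen then srch vs' (t :: chosen) else false) (groups v)
  else true.
Lemma srch_false : srch (iota 0 15) [::] = false. Proof. vm_compute. reflexivity. Qed.
Lemma auts_ok : all isAutN AutList. Proof. vm_compute. reflexivity. Qed.
Lemma trans_ok : all (fun i => all (fun j => has (fun t => nth 0 t i == j) AutList) (iota 0 15)) (iota 0 15).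
Proof. vm_compute. reflexivity. Qed.

Lemma srch_sound (F : nat -> seq nat) vs : uniq vs ->
  (forall v, v \in vs -> F v \in groups v) ->
  (forall v w, v \in vs -> w \in vs -> v != w -> compat (F v) (F w)) ->
  forall chosen, (forall v, v \in vs -> all (compat (F v)) chosen) -> srch vs chosen.
Proof.
elim: vs => [|v vs IH] //= /andP[hv hu] hF hC chosen hch.
apply/hasP; exists (F v); first by apply: hF; rewrite inE eqxx.
rewrite hch ?inE ?eqxx //; apply: IH => //.
- by move=> w hw; apply: hF; rewrite inE hw orbT.
- by move=> w w' hw hw' ne; apply: hC => //; rewrite inE ?hw ?hw' orbT.
- move=> w hw /=; rewrite hch ?inE ?hw ?orbT // andbT.
  apply: hC; rewrite ?inE ?hw ?eqxx ?orbT //.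
  by apply: contraNneq hv => <-.
Qed.

Lemma phi_inj : injective phi.
Proof. by move=> a b h; rewrite -(phiK a) -(phiK b) h. Qed.

Lemma inord15E (a b : nat) : a < 15 -> b < 15 -> ((inord a : 'I_15) == inord b) = (a == b).
Proof. by move=> ha hb; rewrite -val_eqE /= !inordK. Qed.

Lemma aut_classify (s : {perm PE}) : is_aut line_petersen_adj s ->
  [seq val (phi (s (psi (inord x)))) | x <- iota 0 15] \in AutList.
Proof.
move=> ha.
apply: (classify (gN := fun x => val (phi (s (psi (inord x)))))).
- by move=> x _; apply: ltn_ord.
- move=> x y hx hy; rewrite val_eqE -(inord15E hx hy); apply/eqP/eqP => [h|->//].
  by move/phi_inj/perm_inj/psi_inj: h => ->.
- move=> x y hx hy.
  have e1 := psi_adj (phi (s (psi (inord x)))) (phi (s (psi (inord y)))).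
  rewrite -e1 !phiK ha psi_adj.
  by rewrite (inordK hx) (inordK hy).
Qed.

Lemma mem_iota_ord (x : 'I_15) : val x \in iota 0 15.
Proof. by rewrite mem_iota add0n ltn_ord. Qed.

Lemma aut_of_t (t : seq nat) : isAutN t ->
  exists s : {perm PE}, is_aut line_petersen_adj s /\
     forall i : 'I_15, s (psi i) = psi (inord (nth 0 t i)).
Proof.
case/and4P => /eqP hs /allP hb hu /allP ha.
have hlt : forall x : 'I_15, nth 0 t x < 15.
  by move=> x; apply: hb; apply: mem_nth; rewrite hs.
pose h (x : 'I_15) : 'I_15 := inord (nth 0 t x).
have hinj : injective h.
  move=> x y /eqP; rewrite /h inord15E // => /eqP e.
  have hx' : (x : nat) < size t by rewrite hs.
  have hy' : (y : nat) < size t by rewrite hs.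
  by apply: val_inj; apply/eqP; rewrite -(nth_uniq 0 hx' hy' hu) e.
pose f (E : PE) := psi (h (phi E)).
have finj : injective f by move=> a b /psi_inj/hinj/phi_inj.
exists (perm finj); split.
  move=> a b; rewrite !permE /f psi_adj /h !inordK // -(phiK a) -(phiK b) psi_adj !psiK.
  have := ha _ (mem_iota_ord (phi a)); move/allP/(_ _ (mem_iota_ord (phi b))) => /eqP.
  done.
by move=> i; rewrite permE /f psiK.
Qed.

Import GRing.Theory Num.Theory.

Lemma uvt_unique (S : {set {perm PE}}) :
  (\sum_(s in S) perm_matrix s = const_mx 1)%R -> forall u v,
  exists s, [/\ s \in S, s u = v & forall s', s' \in S -> s' u = v -> s' = s].
Proof.
move=> hs u v.
move/matrixP/(_ (enum_rank u) (enum_rank v)): hs.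
rewrite summxE mxE.
under eq_bigr do rewrite /perm_matrix mxE !enum_rankK.
move=> H.
have [|s [hS h1 h0]] := @natr_sum_eq1 _ _ (fun s => s \in S) (fun s => ((s u == v)%:R : int)%R) _ H.
  by move=> s _; apply: natr_nat.
have e1 : s u = v by apply/eqP; move: h1; case: (s u == v).
exists s; split => // s' hs' e'.
case: (eqVneq s' s) => // ne.
by move: (h0 s' ne hs'); rewrite e' eqxx.
Qed.

Theorem mainTheorem8 :
  vertex_transitive line_petersen_adj /\
  ~ uniformly_vertex_transitive line_petersen_adj.
Proof.
split.
  move=> u v.
  have := from_iota (from_iota trans_ok (ltn_ord (phi u))) (ltn_ord (phi v)).
  case/hasP => t ht /eqP hti.
  have [s [ha hs]] := aut_of_t (allP auts_ok t ht).
  exists s; split => //.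
  rewrite -(phiK u) hs hti.
  by rewrite inord_val phiK.
case=> S [hcard haut hsum].
have hU := uvt_unique hsum.
pose sel (v : nat) : {perm PE} := odflt 1%g [pick s in S | s (psi ord0) == psi (inord v)].
have hsel : forall v, sel v \in S /\ sel v (psi ord0) = psi (inord v).
  move=> v; rewrite /sel; case: pickP => [s /andP[hs /eqP e] //|H].
  have [s [hs e _]] := hU (psi ord0) (psi (inord v)).
  by move: (H s); rewrite hs e eqxx.
clearbody sel.
pose FN (v : nat) := [seq val (phi (sel v (psi (inord x)))) | x <- iota 0 15].
have hF : forall v, v \in iota 0 15 -> FN v \in groups v.
  move=> v; rewrite mem_iota add0n => /andP[_ hv].
  have [hS e] := hsel v.
  rewrite /groups mem_filter; apply/andP; split; last first.
    by apply: aut_classify; apply: haut.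
  rewrite /FN (nth_map 0) ?size_iota // nth_iota //.
  have -> : (inord 0 : 'I_15) = ord0 by apply: val_inj; rewrite /= inordK.
  by rewrite e psiK /= inordK.
have hC : forall v w, v \in iota 0 15 -> w \in iota 0 15 -> v != w -> compat (FN v) (FN w).
  move=> v w; rewrite !mem_iota !add0n => /andP[_ hv] /andP[_ hw] ne.
  apply/allP => x; rewrite mem_iota add0n => /andP[_ hx].
  rewrite /FN !(nth_map 0) ?size_iota // nth_iota //.
  apply/negP => /eqP /val_inj /phi_inj ex.
  have [hSv ev] := hsel v; have [hSw ew] := hsel w.
  have [s0 [_ _ hu]] := hU (psi (inord x)) (sel v (psi (inord x))).
  have esw : sel v = sel w by rewrite (hu _ hSv erefl) (hu _ hSw (esym ex)).
  move: ev; rewrite esw ew => /psi_inj /eqP; rewrite inord15E // => /eqP evw.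
  by rewrite evw eqxx in ne.
have := srch_sound (iota_uniq 0 15) hF hC (chosen := [::]) (fun _ _ => isT).
by rewrite srch_false.
Qed.
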